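(* Let $k,r,h$ be positive integers with $r\mid(k+h)$, and let $k'\le k$ be the largest integer divisible by $r$. If there exists a maximally recoverable local $(k,r,h)$-code over a finite field $\mathbb{F}$, then there exists a maximally recoverable data-local $(k',r,h)$-code over the same field $\mathbb{F}$.
   Context: Local codes: for positive integers $k,r,h$ with $r\mid(k+h)$, a local $(k,r,h)$-code over $\mathbb{F}$ is a linear systematic code of dimension $k$ and length $n=k+h+\frac{k+h}{r}$ consisting of $k$ data symbols, $h$ heavy parity symbols (each a fixed $\mathbb{F}$-linear combination of all data symbols), and, after partitioning the $k+h$ data and heavy parity symbols into $\frac{k+h}{r}$ groups of size $r$, one local parity per group equal to the sum (XOR in characteristic $2$) of the $r$ symbols of that group. A local group is such a group of $r$ symbols together with its local parity. A local $(k,r,h)$-code is maximally recoverable if for every set $E$ of coordinates obtained by picking exactly one coordinate from each of the $\frac{k+h}{r}$ local groups, puncturing the code in $E$ (deleting those coordinates) yields a maximum distance separable $[k+h,k]$ code (length $k+h$, dimension $k$, minimum distance $h+1$). Data-local codes: for positive integers $k',r,h$ with $r\mid k'$, a data-local $(k',r,h)$-code over $\mathbb{F}$ is a linear systematic code of dimension $k'$ and length $k'+\frac{k'}{r}+h$ consisting of $k'$ data symbols partitioned into $\frac{k'}{r}$ groups of size $r$, one local parity per group equal to the sum of the $r$ data symbols of the group, and $h$ heavy parity symbols each a fixed $\mathbb{F}$-linear combination of all data symbols. A local group is $r$ data symbols together with their local parity. A data-local $(k',r,h)$-code is maximally recoverable if for every set $E$ obtained by picking exactly one coordinate from each of the $\frac{k'}{r}$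 local groups, puncturing in $E$ yields a maximum distance separable $[k'+h,k']$ code. *)

(* Defs.v *)
From HB Require Import structures.
From mathcomp Require Import all_boot all_order all_algebra.
Set Implicit Arguments. Unset Strict Implicit. Unset Printing Implicit Defensive.
Import GRing.Theory.
Local Open Scope ring_scope.

Section Codes.
Variable F : fieldType.

Definition wt m (v : 'rV[F]_m) : nat := #|[set i | v 0 i != 0]|.

(* The linear code generated by G : 'M_(k, m) is {u *m G | u : 'rV_k}.
   It has minimum distance d: d is the least weight of a nonzero codeword,
   with the usual convention d = m + 1 for the zero code. *)
Definition has_min_dist k m (G : 'M[F]_(k, m)) (d : nat) : Prop :=
  (forall u : 'rV[F]_k, u *m G != 0 -> (d <= wt (u *m G))%N) /\
  ((exists u : 'rV[F]_k, u *m G != 0 /\ wt (u *m G) = d) \/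
   ((forall u : 'rV[F]_k, u *m G = 0) /\ d = m.+1)).

Definition is_MDS k m (G : 'M[F]_(k, m)) (k0 : nat) : Prop :=
  \rank G = k0 /\ has_min_dist G (m - k0 + 1).

(* The code of length n with generator
   G : 'M_(k, n) has local groups indexed by 'I_g; cg i = Some j means that
   coordinate i lies in local group j, cg i = None that it lies in no local
   group.  For every set E picking exactly one coordinate from each local
   group (E = image of e), puncturing in E (keeping the remaining m
   coordinates, listed by the injection f) must give an MDS [m, k] code. *)
Definition max_recoverable k n g m (G : 'M[F]_(k, n)) (cg : 'I_n -> option 'I_g)
  : Prop :=
  forall (e : 'I_g -> 'I_n) (f : 'I_m -> 'I_n),
    (forall j, cg (e j) = Some j) ->
    injective f ->
    (forall i, f i \notin codom e) ->
    is_MDS (colsub f G) k.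

(* Data symbols 'I_k, heavy parities with coefficient matrix A; the k + h
   data/heavy symbols are partitioned by grp into (k+h)/r groups of size r;
   local parity j = sum of the symbols of group j.  Coordinates are ordered
   as (data, heavy, local parities), so n = k + h + (k+h)/r. *)
Definition local_gen k h g (A : 'M[F]_(k, h)) (grp : 'I_(k + h) -> 'I_g)
  : 'M[F]_(k, k + h + g) :=
  let D := row_mx (1%:M : 'M[F]_k) A in
  row_mx D (\matrix_(i < k, j < g) \sum_(a | grp a == j) D i a).

Definition local_groups k h g (grp : 'I_(k + h) -> 'I_g) (i : 'I_(k + h + g))
  : option 'I_g :=
  match split i with inl a => Some (grp a) | inr j => Some j end.

Definition is_partition_r n g r (grp : 'I_n -> 'I_g) : Prop :=
  forall j : 'I_g, #|[set a | grp a == j]| = r.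

Definition exists_MR_local_code (k r h : nat) : Prop :=
  exists (A : 'M[F]_(k, h)) (grp : 'I_(k + h) -> 'I_((k + h) %/ r)),
    is_partition_r r grp /\
    @max_recoverable k _ _ (k + h) (local_gen A grp) (local_groups grp).

(* Data symbols 'I_k' partitioned by grp into k'/r groups of size r, one
   local parity per group (sum of its data symbols), and h heavy parities
   with coefficient matrix A.  Coordinates: (data, local, heavy). *)
Definition data_local_gen k g h (grp : 'I_k -> 'I_g) (A : 'M[F]_(k, h))
  : 'M[F]_(k, k + g + h) :=
  row_mx (row_mx (1%:M : 'M[F]_k) (\matrix_(i < k, j < g) (grp i == j)%:R)) A.

Definition data_local_groups k g h (grp : 'I_k -> 'I_g) (i : 'I_(k + g + h))
  : option 'I_g :=
  match split i with
  | inl b => Some (match split b with inl a => grp a | inr j => j end)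
  | inr _ => None
  end.

Definition exists_MR_data_local_code (k' r h : nat) : Prop :=
  exists (grp : 'I_k' -> 'I_(k' %/ r)) (A : 'M[F]_(k', h)),
    is_partition_r r grp /\
    @max_recoverable k' _ _ (k' + h) (data_local_gen grp A)
      (@data_local_groups k' (k' %/ r) h grp).

End Codes.

(* Main.v *)
Require Import Defs.
From mathcomp Require Import all_boot all_order all_algebra zify.
Set Implicit Arguments. Unset Strict Implicit. Unset Printing Implicit Defensive.
Import GRing.Theory.
Local Open Scope ring_scope.


Lemma splitL m n (i : 'I_m) : split (lshift n i) = inl i.
Proof. by rewrite -[lshift _ _]/(unsplit (inl i)) unsplitK. Qed.
Lemma splitR m n (j : 'I_n) : split (rshift m j) = inr j.
Proof. by rewrite -[rshift _ _]/(unsplit (inr j)) unsplitK. Qed.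

Lemma split_enum n (X : {set 'I_n}) p : #|X| = p ->
  exists pi : 'I_n -> 'I_n, injective pi /\ forall i, (pi i \in X) = (i < p)%N.
Proof.
move=> cX; set s := enum X ++ enum (~: X).
have ss : size s = n by rewrite size_cat -!cardE cardsC card_ord.
have us : uniq s.
  rewrite cat_uniq !enum_uniq /= andbT; apply/hasPn => x.
  by rewrite !mem_enum inE => ->.
exists (fun i => nth i s i); split.
  move=> a b eab; apply: val_inj; apply/eqP.
  rewrite -(nth_uniq a _ _ us) ?ss ?ltn_ord //.
  by rewrite eab (set_nth_default b a) // ss ltn_ord.
move=> i; rewrite nth_cat -cardE cX.
case: ltnP => ip.
  have : nth i (enum X) i \in enum X by apply: mem_nth; rewrite -cardE cX.
  by rewrite mem_enum => ->.
have : nth i (enum (~: X)) (i - p) \in enum (~: X).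
  apply: mem_nth; rewrite -cardE.
  have := cardsC X; rewrite card_ord cX; have := ltn_ord i; set q := #|~: X|; lia.
by rewrite mem_enum inE => /negbTE.
Qed.

Lemma card_lt n p : (p <= n)%N -> #|[set i : 'I_n | (i < p)%N]| = p.
Proof.
move=> pn.
have -> : [set i : 'I_n | (i < p)%N] = widen_ord pn @: setT.
  apply/setP=> i; rewrite !inE; apply/idP/imsetP.
    by move=> ip; exists (Ordinal ip) => //; apply: val_inj.
  by case=> j _ ->; rewrite /= ltn_ord.
rewrite card_imset ?cardsT ?card_ord //.
by move=> a b /(congr1 val) /= /val_inj.
Qed.

Lemma card_part n g r (grp : 'I_n -> 'I_g) p :
  (p <= g)%N -> is_partition_r r grp ->
  #|[set a | (grp a < p)%N]| = (p * r)%N.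
Proof.
move=> pg part.
rewrite -sum1_card (partition_big grp (fun j : 'I_g => (j < p)%N)); last first.
  by move=> a; rewrite inE.
rewrite (eq_bigr (fun _ => r)); last first.
  move=> j jp; rewrite sum1dep_card -(part j); apply: eq_card => a.
  rewrite !inE; case: (grp a =P j) => [->|]; by rewrite ?jp ?andbF.
rewrite sum_nat_const; congr (_ * _)%N.
by rewrite -[RHS](card_lt pg); apply: eq_card => j; rewrite !inE.
Qed.

Section Gen.
Variable F : fieldType.

Lemma colsubE k m n (f : 'I_m -> 'I_n) (G : 'M[F]_(k, n)) (v : 'rV_k) i :
  (v *m colsub f G) 0 i = (v *m G) 0 (f i).
Proof. by rewrite mulmx_colsub mxE. Qed.



Lemma MDS_of_LB k0 m (G : 'M[F]_(k0, m)) :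
  (forall u : 'rV_k0, u != 0 -> (m - k0 + 1 <= wt (u *m G))%N) -> is_MDS G k0.
Proof.
move=> LB.
have nz : forall u : 'rV_k0, u != 0 -> u *m G != 0.
  move=> u /LB; apply: contraTneq => ->.
  rewrite /wt; have -> : [set i | (0 : 'rV[F]_m) 0 i != 0] = set0.
    by apply/setP=> i; rewrite !inE mxE eqxx.
  by rewrite cards0; lia.
have rf : row_free G.
  apply: inj_row_free => v v0; apply/eqP; apply: contraT => /nz.
  by rewrite v0 eqxx.
have rk : \rank G = k0 by apply/eqP.
split=> //; split.
  move=> u uG; apply: LB; apply: contraNneq uG => ->; by rewrite mul0mx.
case: k0 G LB nz rf rk => [|k1] G LB nz rf rk.
  right; split; last by lia.
  move=> u; apply/matrixP=> i j; rewrite !mxE big_ord0 //.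
left.
have km : (k1 <= m)%N by have := rank_leq_col G; lia.
set H := colsub (widen_ord km) G.
have rH : (\rank (kermx H) > 0)%N.
  by rewrite mxrank_ker; have := rank_leq_col H; lia.
have : kermx H != 0 by rewrite -mxrank_eq0 -lt0n.
move=> K0.
have [i ri] : exists i, row i (kermx H) != 0.
  case: (pickP (fun i => row i (kermx H) != 0)) => [i ri|all0]; first by exists i.
  suff: kermx H == 0 by rewrite (negbTE K0).
  apply/eqP.
  apply/row_matrixP => i; rewrite row0; apply/eqP; exact/negbFE/all0.
set u := row i (kermx H).
have uH : u *m H = 0 by rewrite /u -row_mul mulmx_ker row0.
have := LB u ri; set w := wt _ => Lw.
exists u; split; first exact: nz.
apply/eqP; rewrite eqn_leq Lw andbT /w /wt.
have sub : [set i0 | (u *m G) 0 i0 != 0] \subset ~: [set i0 : 'I_m | (i0 < k1)%N].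
  apply/subsetP => x; rewrite !inE; apply: contraNN => xk.
  have -> : x = widen_ord km (Ordinal xk) by apply: val_inj.
  by rewrite -colsubE -/H uH mxE.
apply: (leq_trans (subset_leq_card sub)).
have := cardsC [set i0 : 'I_m | (i0 < k1)%N].
by rewrite card_lt // card_ord; lia.
Qed.

Lemma valid_inj n g (cg : 'I_n -> option 'I_g) (e : 'I_g -> 'I_n) :
  (forall j, cg (e j) = Some j) -> injective e.
Proof. by move=> ve a b eab; have := ve a; rewrite eab ve => -[]. Qed.

Lemma card_compl n g (cg : 'I_n -> option 'I_g) (e : 'I_g -> 'I_n) :
  (forall j, cg (e j) = Some j) ->
  #|[set y | y \notin codom e]| = (n - g)%N.
Proof.
move=> ve; have := cardsC [set y | y \in codom e].
have -> : ~: [set y | y \in codom e] = [set y | y \notin codom e].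
  by apply/setP=> y; rewrite !inE.
rewrite card_ord; have -> : #|[set y | y \in codom e]| = g.
  by rewrite cardsE card_codom ?card_ord //; apply: valid_inj ve.
lia.
Qed.

Lemma imf n g m (cg : 'I_n -> option 'I_g) (e : 'I_g -> 'I_n) (f : 'I_m -> 'I_n) :
  (forall j, cg (e j) = Some j) -> injective f ->
  (forall i, f i \notin codom e) -> (g + m = n)%N ->
  f @: setT = [set y | y \notin codom e].
Proof.
move=> ve fi fe gmn; apply/eqP; rewrite eqEcard; apply/andP; split.
  by apply/subsetP=> y /imsetP [i _ ->]; rewrite inE.
by rewrite (card_compl ve) card_imset // cardsT card_ord; lia.
Qed.

Lemma wt_colsub k n m (G : 'M[F]_(k, n)) (f : 'I_m -> 'I_n) (v : 'rV_k) :
  injective f ->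
  wt (v *m colsub f G) = #|[set y in f @: setT | (v *m G) 0 y != 0]|.
Proof.
move=> fi; rewrite /wt.
have -> : [set y in f @: setT | (v *m G) 0 y != 0] = f @: [set i | (v *m colsub f G) 0 i != 0].
  apply/setP=> y; rewrite !inE; apply/andP/imsetP.
    by case=> /imsetP [i _ ->] H; exists i; rewrite // inE colsubE.
  by case=> i; rewrite inE colsubE => H ->; split=> //; apply: imset_f.
by rewrite card_imset.
Qed.

Lemma count_wt k n g m (cg : 'I_n -> option 'I_g) (G : 'M[F]_(k, n))
  (e : 'I_g -> 'I_n) (f : 'I_m -> 'I_n) (v : 'rV_k) :
  (forall j, cg (e j) = Some j) -> injective f ->
  (forall i, f i \notin codom e) -> (g + m = n)%N ->
  #|[set y | (y \notin codom e) && ((v *m G) 0 y != 0)]| = wt (v *m colsub f G).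
Proof.
move=> ve fi fe gmn; rewrite wt_colsub // (imf ve fi fe gmn).
by apply: eq_card => y; rewrite !inE.
Qed.

Lemma MR_count k n g m (G : 'M[F]_(k, n)) (cg : 'I_n -> option 'I_g)
  (e : 'I_g -> 'I_n) :
  max_recoverable m G cg -> (forall j, cg (e j) = Some j) -> (g + m = n)%N ->
  forall v : 'rV_k, v != 0 ->
  (m - k + 1 <= #|[set y | (y \notin codom e) && ((v *m G) 0%R y != 0%R)]|)%N.
Proof.
move=> MR ve gmn v v0.
set C := [set y | y \notin codom e].
have HC : #|C| = m by rewrite (card_compl ve); lia.
pose f (i : 'I_m) := enum_val (cast_ord (esym HC) i).
have fi : injective f.
  by move=> a b /enum_val_inj /cast_ord_inj.
have fe : forall i, f i \notin codom e.
  by move=> i; have := enum_valP (cast_ord (esym HC) i); rewrite inE.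
have [rk [LB _]] := MR e f ve fi fe.
rewrite (@count_wt _ _ _ _ _ _ _ _ v ve fi fe gmn); apply: LB.
have rf : row_free (colsub f G) by rewrite /row_free rk.
apply: contra v0 => /eqP H; apply/eqP; apply: (row_free_inj rf).
by rewrite /= H mul0mx.
Qed.

Lemma main (k r h : nat) :
  (0 < k)%N -> (0 < r)%N -> (0 < h)%N -> (r %| k + h)%N ->
  exists_MR_local_code F k r h ->
  exists_MR_data_local_code F (k %/ r * r) r h.
Proof.
move=> k0 r0 h0 rkh [A [grp [part MR]]].
set g := ((k + h) %/ r)%N in grp part MR *.
set k' := (k %/ r * r)%N.
set g' := (k' %/ r)%N.
have Hk' : k' = (g' * r)%N by rewrite /g' /k' mulnK.
have Hk'k : (k' <= k)%N by rewrite /k' leq_trunc_div.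
have Hg : (g' <= g)%N by rewrite /g' /g leq_div2r // (leq_trans Hk'k) // leq_addr.
set Pset := [set a : 'I_(k + h) | (grp a < g')%N].
have cardP : #|Pset| = k' by rewrite /Pset (card_part Hg part) -Hk'.
have [pi [pii piP]] := split_enum cardP.
pose sigma (i : 'I_k') := pi (lshift h (widen_ord Hk'k i)).
have grpP : forall i, (grp (sigma i) < g')%N.
  by move=> i; have := piP (lshift h (widen_ord Hk'k i)); rewrite inE /= ltn_ord.
pose grp2 (i : 'I_k') : 'I_g' := Ordinal (grpP i).
pose tau (j : 'I_g') : 'I_g := widen_ord Hg j.
have tau_grp : forall i, tau (grp2 i) = grp (sigma i) by move=> i; apply: val_inj.
have sigi : injective sigma.
  move=> a b /pii /(congr1 val) /= ab; exact: val_inj.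
have sigma_onto : forall a, a \in Pset -> exists i, a = sigma i.
  move=> a aP; have pt := f_invF pii a; set t := invF pii a in pt.
  have tk : (t < k')%N by rewrite -piP pt.
  exists (Ordinal tk); rewrite /sigma -{1}pt; congr pi; exact: val_inj.
have Sa : forall j', [set a | grp a == tau j'] = sigma @: [set i | grp2 i == j'].
  move=> j'; apply/setP => a; rewrite inE; apply/idP/imsetP.
    move=> /eqP ga.
    have aP : a \in Pset by rewrite inE ga /= ltn_ord.
    have [i ai] := sigma_onto a aP.
    exists i => //; rewrite inE; apply/eqP; apply: val_inj => /=.
    by rewrite -ai ga.
  by case=> i; rewrite inE => /eqP <- ->; rewrite -tau_grp.
set G1 := local_gen A grp.
set D := row_mx (1%:M : 'M[F]_k) A.
have c1L : forall (v : 'rV_k) a, (v *m G1) 0 (lshift g a) = (v *m D) 0 a.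
  by move=> v a; rewrite /G1 /local_gen /= mul_mx_row row_mxEl.
have c1R : forall (v : 'rV_k) j, (v *m G1) 0 (rshift (k + h) j) =
    \sum_(a | grp a == j) (v *m D) 0 a.
  move=> v j; rewrite /G1 /local_gen /= mul_mx_row row_mxEr !mxE.
  rewrite (eq_bigr (fun i => \sum_(a | grp a == j) v 0 i * D i a)); last by move=> i _; rewrite mxE mulr_sumr.
  rewrite exchange_big; apply: eq_bigr => a _; rewrite mxE.
  by apply: eq_bigr => i _; rewrite -/D.
have LB1 : forall e : 'I_g -> 'I_(k + h + g),
    (forall j, local_groups grp (e j) = Some j) ->
    forall v : 'rV_k, v != 0 ->
    (h + 1 <= #|[set y | (y \notin codom e) && ((v *m G1) 0%R y != 0%R)]|)%N.
  move=> e ve v v0; have := MR_count MR ve _ v0.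
  by rewrite addKn; apply; rewrite addnC.
pose kappa (j : 'I_k) := pi (lshift h j).
pose rho (l : 'I_h) := pi (rshift k l).
set M := colsub kappa D.
have Mu : M \in unitmx.
  rewrite -row_free_unit; apply: inj_row_free => v vM; apply/eqP.
  apply: contraT => v0.
  have ve0 : forall j, local_groups grp (rshift (k + h) j) = Some j.
    by move=> j; rewrite /local_groups splitR.
  have := LB1 _ ve0 v v0.
  set S1 := [set y | _].
  have kapi : injective kappa by move=> a b /pii /lshift_inj.
  have sub : S1 \subset [set lshift g a | a in ~: (kappa @: setT)].
    apply/subsetP => y; rewrite inE => /andP [ny cy].
    case E: (split y) => [a|j]; have yE := splitK y; rewrite E /= in yE.
      apply/imsetP; exists a => //; rewrite inE; apply/imsetP => -[j _ aj].
      move: cy; rewrite -yE c1L aj -colsubE -/M vM mxE eqxx //.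
    by move: ny; rewrite -yE codom_f.
  have := subset_leq_card sub; rewrite card_imset; last exact: lshift_inj.
  have := cardsC (kappa @: setT); rewrite card_imset // cardsT !card_ord.
  lia.
pose E0 : 'M[F]_(k', k) := \matrix_(i, j) ((i : nat) == j)%:R.
pose T := E0 *m invmx M.
pose A2 := colsub rho (T *m D).
exists grp2, A2; split.
  by move=> j'; rewrite -[RHS](part (tau j')) Sa card_imset.
move=> e2 f2 ve2 fi2 fe2; apply: MDS_of_LB => u u0; rewrite addKn.
have gm : (g' + (k' + h))%N = (k' + g' + h)%N by lia.
rewrite -(@count_wt _ _ _ _ _ _ _ _ u ve2 fi2 fe2 gm).
set v := u *m T.
set w := v *m D.
have wk : forall j, w 0 (kappa j) = (u *m E0) 0 j.
  by move=> j; rewrite -colsubE -/M /v /T !mulmxA mulmxKV.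
have ws : forall i, w 0 (sigma i) = u 0 i.
  move=> i; rewrite /sigma -/(kappa _) wk mxE (bigD1 i) //= big1 ?addr0.
    by rewrite mxE eqxx mulr1.
  by move=> l li; rewrite mxE; case: eqP => [/val_inj/eqP|]; rewrite ?(negbTE li) ?mulr0.
have wS : forall j : 'I_k, (k' <= j)%N -> w 0 (kappa j) = 0.
  move=> j kj; rewrite wk mxE big1 // => l _; rewrite mxE.
  by case: eqP => [lj|]; rewrite ?mulr0 //; have := ltn_ord l; lia.
have v0 : v != 0.
  apply: contra u0 => /eqP v0; apply/eqP/rowP => i.
  by rewrite -ws /w v0 mul0mx !mxE.
pose psi (x : 'I_(k' + g' + h)) : 'I_(k + h + g) :=
  match split x with
  | inl b => match split b with
             | inl i => lshift g (sigma i)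
             | inr j' => rshift (k + h) (tau j') end
  | inr l => lshift g (rho l) end.
pose e1 (j : 'I_g) : 'I_(k + h + g) :=
  if (insub (val j) : option 'I_g') is Some j' then psi (e2 j')
  else rshift (k + h) j.
have K1 : forall j', e1 (tau j') = psi (e2 j').
  move=> j'; rewrite /e1; case: insubP => [j'' _ vj|]; last by rewrite /= ltn_ord.
  by congr (psi (e2 _)); apply: val_inj; rewrite vj.
have K4 : forall x j', data_local_groups grp2 x = Some j' ->
    local_groups grp (psi x) = Some (tau j').
  move=> x j'; rewrite /data_local_groups /psi.
  case: (split x) => [b|l] //; case: (split b) => [i|j''] [<-];
    rewrite /local_groups ?splitL ?splitR //.
  by rewrite tau_grp.
have ve1 : forall j, local_groups grp (e1 j) = Some j.
  move=> j; rewrite /e1; case: insubP => [j' _ vj|nj].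
    rewrite (K4 _ _ (ve2 j')); congr Some; apply: val_inj; by rewrite /= vj.
  by rewrite /local_groups splitR.
have K2 : forall x, (u *m data_local_gen grp2 A2) 0 x = (v *m G1) 0 (psi x).
  move=> x; case E: (split x) => [b|l]; have xE := splitK x; rewrite E /= in xE;
    rewrite -xE /psi ?splitL ?splitR.
    case E': (split b) => [i|j']; have bE := splitK b; rewrite E' /= in bE;
      rewrite -bE ?splitL ?splitR.
      by rewrite c1L ws /data_local_gen !mul_mx_row !row_mxEl mulmx1.
    rewrite c1R (eq_bigl (mem [set a | grp a == tau j'])); last by move=> a; rewrite /= in_set.
    rewrite Sa big_imset /=; last by move=> a1 a2 _ _; apply: sigi.
    rewrite [RHS]big_mkcond /= /data_local_gen mul_mx_row row_mxEl mul_mx_row row_mxEr mxE.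
    apply: eq_bigr => i _; rewrite mxE inE ws.
    by case: eqP => _; rewrite ?mulr1 ?mulr0.
  by rewrite c1L /data_local_gen mul_mx_row row_mxEr colsubE /w /v mulmxA.
have LB := LB1 e1 ve1 v v0.
apply: (leq_trans LB).
set S1 := [set y | _ && _ ]; set S2 := [set y | _ && _].
have fin : forall x y, psi x = y -> y \in S1 -> y \in psi @: S2.
  move=> x y <-; rewrite inE => /andP [ny cy]; apply: imset_f.
  rewrite inE K2 cy andbT.
  by apply: contra ny => /codomP [j' ->]; rewrite -K1 codom_f.
have sub : S1 \subset psi @: S2.
  apply/subsetP => y yS; move: (yS); rewrite inE => /andP [ny cy].
  case E: (split y) => [a|j]; have yE := splitK y; rewrite E /= in yE.
    have pt := f_invF pii a; set t := invF pii a in pt.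
    case Et: (split t) => [j|l]; have tE := splitK t; rewrite Et /= in tE.
      case: (ltnP j k') => jk.
        apply: (fin (lshift h (lshift g' (Ordinal jk)))) => //.
        rewrite /psi !splitL -yE -pt -tE; congr (lshift g (pi (lshift h _))).
        exact: val_inj.
      move: cy; rewrite -yE c1L -pt -tE -/(kappa j) wS // eqxx //.
    apply: (fin (rshift (k' + g') l)) => //.
    by rewrite /psi splitR -yE -pt -tE.
  case: (ltnP j g') => jg.
    apply: (fin (lshift h (rshift k' (Ordinal jg)))) => //.
    rewrite /psi splitL splitR -yE; congr rshift; exact: val_inj.
  have : e1 j = rshift (k + h) j.
    by rewrite /e1; case: insubP => [j' jlt vj|] //; move: jlt => /=; rewrite ltnNge jg.
  by move: ny; rewrite -yE => /[swap] <-; rewrite codom_f.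
by apply: (leq_trans (subset_leq_card sub)); apply: leq_imset_card.
Qed.
End Gen.

Local Close Scope ring_scope.
Theorem lemma7 (F : finFieldType) (k r h : nat) :
  (0 < k)%N -> (0 < r)%N -> (0 < h)%N -> (r %| k + h)%N ->
  exists_MR_local_code F k r h ->
  exists_MR_data_local_code F (k %/ r * r) r h.
Proof. exact: (@main F k r h). Qed.
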